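(* Let $\mathrm{Alg}$ be any randomized algorithm for online control, and let $f$ be a function such that the following guarantee holds: for all $d,T\in\mathbb{N}$, all $\alpha_{\mathrm{ub}}\in(0,1)$ with $\mathcal{I}:=\bigcup_{\alpha\in[0,\alpha_{\mathrm{ub}}]}\Delta^d_\alpha$, all $L>0$, and every simplex LDS $\mathcal{L}=(A,B,\mathcal{I},x_1,(\gamma_t)_t,(w_t)_t,(c_t)_t)$ with state space $\Delta^d$ whose cost functions are convex and $L$-Lipschitz (in the sense below), the iterates $(x_t,u_t)_{t=1}^T$ produced by $\mathrm{Alg}$ with input $(A,B,\mathcal{I},T)$ on interaction with $\mathcal{L}$ satisfy $$\mathbb{E}\Big[\sum_{t=1}^Tc_t(x_t,u_t)\Big]-\inf_{K\in\mathcal{K}(\mathcal{I})}\sum_{t=1}^Tc_t(x_t^{\mathcal{L},K},u_t^{\mathcal{L},K})\le f(d,L,\alpha_{\mathrm{ub}},T).$$ Then for any sufficiently large constant $\beta$, setting $\alpha_{\mathrm{ub}}(T):=\beta/T$, we have $f(2,1,\alpha_{\mathrm{ub}}(T),T)=\Omega(T)$.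
   Context: $\Delta^d$ is the probability simplex in $\mathbb{R}^d$, $\Delta^d_\alpha:=\alpha\Delta^d$. $\mathbb{S}^d$ is the set of $d\times d$ column-stochastic matrices and $\mathbb{S}^d_\alpha:=\{\alpha M:M\in\mathbb{S}^d\}$. A simplex LDS on $\Delta^d$ is a tuple $(A,B,\mathcal{I},x_1,(\gamma_t),(w_t),(c_t))$ with $A,B\in\mathbb{S}^d$, valid control set $\mathcal{I}\subseteq\bigcup_{\alpha\in[0,1]}\Delta^d_\alpha$, $x_1\in\Delta^d$, $\gamma_t\in[0,1]$, $w_t\in\Delta^d$, $c_t:\Delta^d\times\mathcal{I}\to\mathbb{R}$; given $x_t$ and control $u_t\in\mathcal{I}$, $x_{t+1}=(1-\gamma_t)[(1-\|u_t\|_1)Ax_t+Bu_t]+\gamma_tw_t$, and cost $c_t(x_t,u_t)$ is incurred. Online protocol: $A,B$ known; at each step the controller observes $x_t$ (and $\gamma_t$ once it is realized), plays $u_t\in\mathcal{I}$, then observes $c_t$; perturbations $w_t$ are unknown. Cost assumption: $c_t$ convex and $|c_t(x,u)-c_t(x',u')|\le L(\|x-x'\|_1+\|u-u'\|_1)$. $\mathcal{K}(\mathcal{I})$ is the set of linear time-invariant policies $x\mapsto Kx$ with $K\in\bigcup_{\alpha\in[0,\alpha_{\mathrm{ub}}]}\mathbb{S}^d_\alpha$, and $(x_t^{\mathcal{L},K},u_t^{\mathcal{L},K})$ are the iterates from playing $u_t=Kx_t$ at all times. $\Omega(T)$ is as $T\to\infty$. *)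

(* Defs.v *)
From HB Require Import structures.
From mathcomp Require Import all_boot all_order all_algebra.
From mathcomp Require Import all_classical all_reals all_analysis.
Set Implicit Arguments. Unset Strict Implicit. Unset Printing Implicit Defensive.
Import Order.TTheory GRing.Theory Num.Theory.
Local Open Scope ring_scope.
Local Open Scope classical_set_scope.

Section SimplexLDS.
Variable R : realType.

Definition norm1 d (v : 'cV[R]_d) : R := \sum_(i < d) `|v i 0|.

Definition in_simplex_scaled d (a : R) (v : 'cV[R]_d) : Prop :=
  (forall i, 0 <= v i 0) /\ \sum_(i < d) v i 0 = a.

Definition in_simplex d (v : 'cV[R]_d) : Prop := in_simplex_scaled 1 v.

Definition valid_control d (aub : R) (u : 'cV[R]_d) : Prop :=
  exists2 a : R, 0 <= a <= aub & in_simplex_scaled a u.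

Definition col_stochastic d (M : 'M[R]_d) : Prop :=
  (forall i j, 0 <= M i j) /\ (forall j, \sum_(i < d) M i j = 1).

Definition lin_policy_class d (aub : R) (K : 'M[R]_d) : Prop :=
  exists (a : R) (M : 'M[R]_d), [/\ 0 <= a <= aub, col_stochastic M & K = a *: M].

(* cost functions c_t : Delta^d x I -> R, given as total functions *)
Definition cost_fn d := 'cV[R]_d -> 'cV[R]_d -> R.

Definition convex_cost d (aub : R) (c : cost_fn d) : Prop :=
  forall (x x' u u' : 'cV[R]_d) (l : R),
    in_simplex x -> in_simplex x' -> valid_control aub u -> valid_control aub u' ->
    0 <= l <= 1 ->
    c (l *: x + (1 - l) *: x') (l *: u + (1 - l) *: u') <= l * c x u + (1 - l) * c x' u'.

Definition lipschitz_cost d (aub L : R) (c : cost_fn d) : Prop :=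
  forall (x x' u u' : 'cV[R]_d),
    in_simplex x -> in_simplex x' -> valid_control aub u -> valid_control aub u' ->
    `|c x u - c x' u'| <= L * (norm1 (x - x') + norm1 (u - u')).

Definition lds_step d (A B : 'M[R]_d) (x u w : 'cV[R]_d) (g : R) : 'cV[R]_d :=
  (1 - g) *: ((1 - norm1 u) *: (A *m x) + B *m u) + g *: w.

(* Time is 0-indexed: x1 is the state at index 0,
   g t, w t, c t are gamma_{t+1}, w_{t+1}, c_{t+1}. *)
Definition valid_lds d (aub L : R) (A B : 'M[R]_d) (x1 : 'cV[R]_d)
    (g : nat -> R) (w : nat -> 'cV[R]_d) (c : nat -> cost_fn d) : Prop :=
  col_stochastic A /\ col_stochastic B /\ in_simplex x1 /\
  (forall t, 0 <= g t <= 1) /\ (forall t, in_simplex (w t)) /\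
  (forall t, convex_cost aub (c t)) /\ (forall t, lipschitz_cost aub L (c t)).

(* A deterministic online policy: at (0-indexed) time t it sees the states
   x_0..x_t, its past controls u_0..u_{t-1}, the realized g_0..g_{t-1} and the
   revealed cost functions c_0..c_{t-1}, and outputs u_t. *)
Definition policy d :=
  nat -> seq 'cV[R]_d -> seq 'cV[R]_d -> seq R -> seq (cost_fn d) -> 'cV[R]_d.

(* An algorithm: on input (d, A, B, I (given by aub), T) returns a policy. *)
Definition algorithm := forall d : nat, 'M[R]_d -> 'M[R]_d -> R -> nat -> policy d.

Section Run.
Variables (d : nat) (pol : policy d) (A B : 'M[R]_d) (x1 : 'cV[R]_d)
  (g : nat -> R) (w : nat -> 'cV[R]_d) (c : nat -> cost_fn d).

(* (x_0..x_t, u_0..u_{t-1}) *)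
Fixpoint run (t : nat) : seq 'cV[R]_d * seq 'cV[R]_d :=
  match t with
  | 0 => ([:: x1], [::])
  | t'.+1 =>
      let: (xs, us) := run t' in
      let xt := last x1 xs in
      let ut := pol t' xs us (map g (iota 0 t')) (map c (iota 0 t')) in
      (rcons xs (lds_step A B xt ut (w t') (g t')), rcons us ut)
  end.

Definition alg_state (t : nat) : 'cV[R]_d := last x1 (run t).1.

Definition alg_control (t : nat) : 'cV[R]_d :=
  pol t (run t).1 (run t).2 (map g (iota 0 t)) (map c (iota 0 t)).

Definition alg_cost (T : nat) : R :=
  \sum_(t < T) c t (alg_state t) (alg_control t).

Fixpoint lin_state (K : 'M[R]_d) (t : nat) : 'cV[R]_d :=
  match t with
  | 0 => x1
  | t'.+1 => lds_step A B (lin_state K t') (K *m lin_state K t') (w t') (g t')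
  end.

Definition lin_cost (K : 'M[R]_d) (T : nat) : R :=
  \sum_(t < T) c t (lin_state K t) (K *m lin_state K t).
End Run.

(* A randomized algorithm: a deterministic algorithm for each random seed om
   drawn from a probability space (Omega, P). It always plays valid controls. *)
Definition alg_valid (T0 : Type) (Alg : T0 -> algorithm) : Prop :=
  forall om d A B (aub : R) T t xs us gs cs, 0 < aub < 1 ->
    valid_control aub (Alg om d A B aub T t xs us gs cs).

Definition regret_guarantee (dO : measure_display) (Omega : measurableType dO)
    (P : probability Omega R) (Alg : Omega -> algorithm)
    (f : nat -> R -> R -> nat -> R) : Prop :=
  forall (d T : nat) (aub L : R) (A B : 'M[R]_d) (x1 : 'cV[R]_d)
    (g : nat -> R) (w : nat -> 'cV[R]_d) (c : nat -> cost_fn d),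
    0 < aub < 1 -> 0 < L -> valid_lds aub L A B x1 g w c ->
    let J := fun om => alg_cost (Alg om d A B aub T) A B x1 g w c T in
    measurable_fun setT J /\
    (\int[P]_om (J om)%:E
      - (inf ((fun K => lin_cost A B x1 g w c K T) @` lin_policy_class aub))%:E
      <= (f d L aub T)%:E)%E.

End SimplexLDS.

(* Main.v *)
Require Import Defs.
From HB Require Import structures.
From mathcomp Require Import all_boot all_order all_algebra.
From mathcomp Require Import all_classical all_reals all_analysis.
From mathcomp Require Import ring lra.
Import Order.TTheory GRing.Theory Num.Theory.
Local Open Scope ring_scope.

Section Aux.
Variable R : realType.

Lemma valid_norm1 {d : nat} {aub : R} {u : 'cV[R]_d} : valid_control aub u ->
  [/\ forall i, 0 <= u i 0, 0 <= norm1 u, norm1 u <= aub &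
      \sum_(i < d) u i 0 = norm1 u].
Proof.
case=> a /andP[a0 aa] [u0 su].
have E : norm1 u = a by rewrite /norm1 -su; apply: eq_bigr => i _; rewrite ger0_norm.
by split => //; rewrite ?E // su.
Qed.

Lemma step_simpl d (x u w : 'cV[R]_d) :
  lds_step 1%:M 1%:M x u w 0 = (1 - norm1 u) *: x + u.
Proof. by rewrite /lds_step subr0 scale1r !mul1mx scale0r addr0. Qed.

Lemma bern (a : R) n : 0 <= a <= 1 -> (1 - a) ^+ n * (1 + n%:R * a) <= 1 /\ 1 - n%:R * a <= (1 - a) ^+ n.
Proof.
move=> /andP[a0 a1]; elim: n => [|n [IH1 IH2]]; first by rewrite expr0 mul0r addr0 mul1r subr0.
have e0 : 0 <= (1 - a) ^+ n by apply: exprn_ge0; lra.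
rewrite exprS -natr1; split.
  have : (1 - a) * (1 + (n%:R + 1) * a) <= 1 + n%:R * a.
    have : 0 <= n%:R :> R by [].
    nra.
  move=> h.
  have h2 : (1 - a) ^+ n * ((1 - a) * (1 + (n%:R + 1) * a)) <= (1 - a) ^+ n * (1 + n%:R * a) by rewrite ler_wpM2l.
  set X := (1 - a) ^+ n in h2 IH1 *.
  have -> : (1 - a) * X * (1 + (n%:R + 1) * a) = X * ((1 - a) * (1 + (n%:R + 1) * a)) by ring.
  exact: le_trans h2 IH1.
have : 0 <= n%:R :> R by [].
nra.
Qed.

Lemma dyn_simplex d (aub : R) (X U : nat -> 'cV[R]_d) :
  aub <= 1 -> in_simplex (X 0%N) -> (forall t, valid_control aub (U t)) ->
  (forall t, X t.+1 = (1 - norm1 (U t)) *: X t + U t) ->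
  forall t, in_simplex (X t).
Proof.
move=> a1 x0 vU eX; elim=> // t [IH1 IH2].
have [u0 n0 n1 su] := valid_norm1 (vU t).
rewrite eX; split.
  move=> i; rewrite !mxE; apply: addr_ge0 => //; apply: mulr_ge0 => //; lra.
rewrite (eq_bigr (fun i => (1 - norm1 (U t)) * X t i 0 + U t i 0)); last by move=> i _; rewrite !mxE.
by rewrite big_split /= -mulr_sumr IH2 su; lra.
Qed.

Lemma dyn_decay d (aub : R) (X U : nat -> 'cV[R]_d) :
  aub <= 1 -> in_simplex (X 0%N) -> (forall t, valid_control aub (U t)) ->
  (forall t, X t.+1 = (1 - norm1 (U t)) *: X t + U t) ->
  forall t j k, (1 - aub) ^+ j * X t k 0 <= X (t + j)%N k 0.
Proof.
move=> a1 x0 vU eX t j k.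
have S := @dyn_simplex d aub X U a1 x0 vU eX.
elim: j => [|j IH]; first by rewrite expr0 mul1r addn0.
rewrite addnS eX !mxE.
have [u0 n0 n1 su] := valid_norm1 (vU (t + j)%N).
have [xs _] := S (t + j)%N.
have := xs k; have := u0 k.
rewrite exprS -mulrA.
have h0 : 0 <= (1 - aub) by lra.
have : (1 - aub) * ((1 - aub) ^+ j * X t k 0) <= (1 - aub) * X (t + j)%N k 0 by rewrite ler_wpM2l.
nra.
Qed.

Lemma sum2 (p q : 'I_2) (F : 'I_2 -> R) : p != q -> \sum_(i < 2) F i = F p + F q.
Proof.
rewrite big_ord_recr big_ord1 /=.
case: p q => [[|[|p]] hp] [[|[|q]] hq] //= _.
- by congr (F _ + F _); apply: val_inj.
- by rewrite addrC; congr (F _ + F _); apply: val_inj.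
Qed.

End Aux.
Section Aux2.
Variable R : realType.

Lemma run_ext d (pol : policy R d) A B x1 g w (c c' : nat -> cost_fn R d) t :
  (forall i, (i < t)%N -> c i = c' i) ->
  run pol A B x1 g w c t = run pol A B x1 g w c' t.
Proof.
elim: t => [//|t IH] H /=.
rewrite IH; last by move=> i hi; apply: H; apply: ltnW.
case: (run _ _ _ _ _ _ _ t) => xs us.
have -> : map c (iota 0 t) = map c' (iota 0 t).
  by apply/eq_in_map => i; rewrite mem_iota add0n => /andP[_ hi]; apply: H; apply: ltnW.
by [].
Qed.

Lemma alg_state_S d (pol : policy R d) A B x1 g w c t :
  alg_state pol A B x1 g w c t.+1 =
  lds_step A B (alg_state pol A B x1 g w c t) (alg_control pol A B x1 g w c t) (w t) (g t).
Proof.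
rewrite /alg_state /alg_control /=.
by case: (run _ _ _ _ _ _ _ t) => xs us /=; rewrite last_rcons.
Qed.

Lemma norm1_ge0 {d} (v : 'cV[R]_d) : 0 <= norm1 v.
Proof. by apply: sumr_ge0 => i _. Qed.

Lemma entry_le_norm1 {d} (v : 'cV[R]_d) k : `|v k 0| <= norm1 v.
Proof.
rewrite /norm1 (bigD1 k) //= lerDl; exact: sumr_ge0.
Qed.

Definition cc (k : 'I_2) (T m : nat) : nat -> cost_fn R 2 :=
  fun t x u => if (T - m <= t)%N then `|x k 0| else 0.

Lemma cc_ge0 k T m t x u : 0 <= cc k T m t x u.
Proof. by rewrite /cc; case: ifP. Qed.

Lemma cc_convex k T m aub t : convex_cost aub (cc k T m t).
Proof.
move=> x x' u u' l _ _ _ _ /andP[l0 l1]; rewrite /cc; case: ifP => _; last first.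
  by rewrite !mulr0 addr0.
rewrite !mxE; apply: le_trans (ler_normD _ _) _.
by rewrite !normrM (ger0_norm l0) [`|1 - l|]ger0_norm ?subr_ge0.
Qed.

Lemma cc_lip k T m aub t : lipschitz_cost aub 1 (cc k T m t).
Proof.
move=> x x' u u' _ _ _ _; rewrite /cc mul1r; case: ifP => _; last first.
  by rewrite subr0 normr0 addr_ge0 ?norm1_ge0.
apply: le_trans (ler_dist_dist _ _) _.
have := entry_le_norm1 (x - x') k; rewrite !mxE => h.
apply: le_trans h _; rewrite lerDl; exact: norm1_ge0.
Qed.

Definition xh : 'cV[R]_2 := const_mx (1/2).

Lemma xh_simplex : in_simplex xh.
Proof.
split; first by move=> i; rewrite mxE.
by rewrite big_ord_recr big_ord1 /= !mxE; field.
Qed.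

Lemma id_stoch d : col_stochastic (1%:M : 'M[R]_d).
Proof.
split; first by move=> i j; rewrite mxE; case: (i == j).
move=> j; rewrite (bigD1 j) //= big1 ?mxE ?eqxx ?addr0 // => i /negbTE ne.
by rewrite mxE ne.
Qed.

Lemma inst_valid k T m aub : 0 < aub -> valid_lds aub 1 1%:M 1%:M xh (fun _ => 0) (fun _ => xh) (cc k T m).
Proof.
move=> a0; split; first exact: id_stoch.
split; first exact: id_stoch.
split; first exact: xh_simplex.
split; first by move=> t; rewrite lexx ler01.
split; first by move=> t; exact: xh_simplex.
split; first by move=> t; exact: cc_convex.
by move=> t; exact: cc_lip.
Qed.

End Aux2.
Section Aux3.
Variable R : realType.

Lemma sum_window T m (F : nat -> R) : (m <= T)%N ->
  \sum_(t < T) (if (T - m <= t)%N then F t else 0) = \sum_(T - m <= t < T) F t.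
Proof.
move=> hm.
rewrite -(big_mkord xpredT (fun t => if (T - m <= t)%N then F t else 0)).
rewrite (big_cat_nat (n := T - m)) ?leq_subr //=.
rewrite [X in X + _]big_nat big1 ?add0r; last first.
  by move=> t /andP[_ ht]; rewrite leqNgt ht.
by apply: eq_big_nat => t /andP[ht _]; rewrite ht.
Qed.

Definition Mq (q : 'I_2) : 'M[R]_2 := \matrix_(i < 2, j < 2) (i == q)%:R.

Lemma Mq_stoch q : col_stochastic (Mq q).
Proof.
split; first by move=> i j; rewrite mxE; case: (i == q).
move=> j; rewrite (bigD1 q) //= big1 ?mxE ?eqxx ?addr0 // => i /negbTE ne.
by rewrite mxE ne.
Qed.

Lemma lin_expl (p q : 'I_2) (aub : R) : p != q -> 0 <= aub <= 1 -> forall t,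
  let X := lin_state 1%:M 1%:M (xh R) (fun _ => 0) (fun _ => xh R) (aub *: Mq q) t in
  X p 0 = (1 - aub) ^+ t / 2 /\ X p 0 + X q 0 = 1.
Proof.
move=> hpq /andP[a0 a1]; elim=> [|t [IH1 IH2]] /=.
  by rewrite !mxE expr0; split => //; field.
rewrite step_simpl.
set X := lin_state _ _ _ _ _ _ t in IH1 IH2 *.
have KX : forall i, (aub *: Mq q *m X) i 0 = aub * (i == q)%:R.
  move=> i; rewrite mxE (@sum2 R p q _ hpq) !mxE.
  by rewrite -mulrDr IH2 mulr1.
have nK : norm1 (aub *: Mq q *m X) = aub.
  rewrite /norm1 (@sum2 R p q (fun i => `|(aub *: Mq q *m X) i 0|) hpq) /=.
 rewrite !mxE !(@sum2 R p q _ hpq) !mxE.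
  rewrite -!mulrDr IH2 eqxx (negbTE hpq) mulr0 mul0r normr0 add0r !mulr1.
  exact: ger0_norm.
rewrite !mxE nK !(@sum2 R p q _ hpq) !mxE -!mulrDr IH2 eqxx (negbTE hpq) !mulr0 !mul0r addr0 !mulr1 IH1 exprS; split; first by field.
have -> : X q 0 = 1 - X p 0 by rewrite -IH2; ring.
rewrite IH1; ring.
Qed.

End Aux3.
Section Aux4.
Variable R : realType.
Local Open Scope classical_set_scope.

Lemma inf_bound (p q : 'I_2) (aub : R) T m : p != q -> 0 <= aub <= 1 -> (m <= T)%N ->
  inf ((fun K => lin_cost 1%:M 1%:M (xh R) (fun _ => 0) (fun _ => xh R) (cc R p T m) K T)
        @` lin_policy_class aub) <= m%:R * ((1 - aub) ^+ (T - m) / 2).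
Proof.
move=> hpq ha hm.
have hlb : has_lbound ((fun K => lin_cost 1%:M 1%:M (xh R) (fun _ => 0) (fun _ => xh R) (cc R p T m) K T)
        @` lin_policy_class aub).
  exists 0 => y [K _ <-]; apply: sumr_ge0 => t _; exact: cc_ge0.
have hK : lin_policy_class aub (aub *: Mq R q).
  exists aub, (Mq R q); split => //; last exact: Mq_stoch.
  by case/andP: ha => a0 _; rewrite a0 lexx.
apply: le_trans (ge_inf hlb (ex_intro2 _ _ _ hK erefl)) _.
rewrite /lin_cost /cc (@sum_window R T m (fun t => `|lin_state 1%:M 1%:M (xh R) (fun=>0) (fun=>xh R) (aub *: Mq R q) t p 0|)) //.
apply: (le_trans (y := \sum_(T - m <= t < T) ((1 - aub) ^+ (T - m) / 2))); last first.
  by rewrite sumr_const_nat subKn // mulr_natl.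
rewrite big_nat_cond [X in _ <= X]big_nat_cond; apply: ler_sum => t /andP[/andP[h1 h2] _].
have [E _] := @lin_expl R p q aub hpq ha t.
rewrite E ger0_norm; last by apply: divr_ge0 => //; apply: exprn_ge0; case/andP: ha => _ a1; rewrite subr_ge0.
rewrite ler_pM2r ?invr_gt0 ?ltr0n //.
case/andP: ha => a0 a1; apply: ler_wiXn2l => //; rewrite ?subr_ge0 // ?lerBlDr ?lerDl //.
Qed.

Lemma pair_bound (p q : 'I_2) (aub : R) T m (Xp Xq Up Uq : nat -> 'cV[R]_2) :
  p != q -> 0 <= aub <= 1 -> (m <= T)%N ->
  in_simplex (Xp 0%N) -> in_simplex (Xq 0%N) ->
  (forall t, valid_control aub (Up t)) -> (forall t, valid_control aub (Uq t)) ->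
  (forall t, Xp t.+1 = (1 - norm1 (Up t)) *: Xp t + Up t) ->
  (forall t, Xq t.+1 = (1 - norm1 (Uq t)) *: Xq t + Uq t) ->
  Xp (T - m)%N = Xq (T - m)%N ->
  m%:R * (1 - m%:R * aub) <=
  \sum_(t < T) (cc R p T m t (Xp t) (Up t) + cc R q T m t (Xq t) (Uq t)).
Proof.
move=> hpq ha hm sp sq vp vq ep eq E.
have a1 : aub <= 1 by case/andP: ha.
have a0 : 0 <= aub by case/andP: ha.
rewrite (eq_bigr (fun t : 'I_T => if (T - m <= t)%N then `|Xp t p 0| + `|Xq t q 0| else 0)); last first.
  by move=> t _; rewrite /cc; case: ifP; rewrite ?addr0.
rewrite (@sum_window R T m (fun t => `|Xp t p 0| + `|Xq t q 0|)) //.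
apply: (le_trans (y := \sum_(T - m <= t < T) (1 - m%:R * aub))).
  by rewrite sumr_const_nat subKn // mulr_natl.
rewrite big_nat_cond [X in _ <= X]big_nat_cond; apply: ler_sum => t /andP[/andP[h1 h2] _].
have Ht : t = ((T - m) + (t - (T - m)))%N by rewrite subnKC.
have hj : (t - (T - m) <= m)%N.
  by rewrite leq_subLR; apply: ltnW; rewrite subnK // ?(leq_trans h1) //; rewrite -{1}(subnK hm) leq_addl.
set j := (t - (T - m))%N in Ht hj.
have dp := @dyn_decay R 2 aub Xp Up a1 sp vp ep (T - m)%N j p.
have dq := @dyn_decay R 2 aub Xq Uq a1 sq vq eq (T - m)%N j q.
rewrite -Ht in dp dq.
have [_ sY] := @dyn_simplex R 2 aub Xq Uq a1 sq vq eq (T - m)%N.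
rewrite (@sum2 R p q _ hpq) in sY.
have [_ b] := @bern R aub m ha.
have hjm : (1 - aub) ^+ m <= (1 - aub) ^+ j by apply: ler_wiXn2l; rewrite ?subr_ge0 ?lerBlDr ?lerDl.
have : (1 - aub) ^+ j * Xp (T - m)%N p 0 + (1 - aub) ^+ j * Xq (T - m)%N q 0 = (1 - aub) ^+ j.
  by rewrite -mulrDr E sY mulr1.
move: dp dq => dp dq hs.
apply: (le_trans b); apply: (le_trans hjm); rewrite -hs.
apply: lerD; [apply: le_trans dp (ler_norm _) | apply: le_trans dq (ler_norm _)].
Qed.

End Aux4.
Theorem theorem6 (R : realType) (dO : measure_display) (Omega : measurableType dO)
    (P : probability Omega R) (Alg : Omega -> algorithm R)
    (f : nat -> R -> R -> nat -> R) :
  alg_valid Alg -> regret_guarantee P Alg f ->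
  exists beta0 : R, forall beta : R, beta0 <= beta ->
    exists2 c : R, 0 < c &
      exists T0 : nat, forall T : nat, (T0 <= T)%N ->
        c * T%:R <= f 2%N 1 (beta / T%:R) T.
Proof.
move=> Hval Hreg.
exists 8 => beta hb.
have b0 : 0 < beta by apply: lt_le_trans hb.
exists (1 / (32 * beta)); first by apply: divr_gt0 => //; apply: mulr_gt0.
exists (Num.truncn (8 * beta)).+1 => T hT.
have hT8 : 8 * beta < T%:R.
  apply: lt_le_trans (truncnS_gt _) _; by rewrite ler_nat.
set tR := T%:R in hT8 *.
have T0 : 0 < tR by apply: lt_trans hT8; apply: mulr_gt0.
set aub := beta / tR.
have a0 : 0 < aub by apply: divr_gt0.
have a8 : aub < 1 / 8.
  by rewrite /aub ltr_pdivrMr // mulrC mulrA; lra.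
have ha : 0 <= aub <= 1 by apply/andP; split; lra.
have ha' : 0 < aub < 1 by apply/andP; split; lra.
set m := Num.truncn (tR / (4 * beta)).
have q0 : 0 <= tR / (4 * beta) by apply: divr_ge0; lra.
have hm1 : m%:R <= tR / (4 * beta) by rewrite truncn_le.
have hm2 : tR / (4 * beta) < m%:R + 1 by rewrite natr1; exact: truncnS_gt.
set mR := m%:R in hm1 hm2.
have m0 : 0 <= mR by [].
have e1 : mR * (4 * beta) <= tR by rewrite -ler_pdivlMr //; lra.
have hmT : (m <= T)%N.
  rewrite -(ler_nat R) -/tR -/mR; nra.
have ma : mR * aub <= 1 / 4.
  by rewrite /aub mulrA ler_pdivrMr //; lra.
have hTm : (T - m)%:R * aub >= 7.
  rewrite natrB // -/tR -/mR mulrBl {1}/aub mulrCA divff ?mulr1; [lra | by apply: lt0r_neq0].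
have hX : (1 - aub) ^+ (T - m) <= 1 / 8.
  have [b _] := @bern R aub (T - m) ha.
  have X0 : 0 <= (1 - aub) ^+ (T - m) by apply: exprn_ge0; lra.
  nra.
set X := (1 - aub) ^+ (T - m) in hX.
have X0 : 0 <= X by apply: exprn_ge0; lra.
pose p : 'I_2 := ord0. pose q : 'I_2 := ord_max.
have hpq : p != q by [].
have hqp : q != p by [].
pose g0 := fun _ : nat => 0 : R.
pose w0 := fun _ : nat => xh R.
have [mJp Ip] := Hreg 2%N T aub 1 1%:M 1%:M (xh R) g0 w0 (cc R p T m) ha' ltr01 (@inst_valid R p T m aub a0).
have [mJq Iq] := Hreg 2%N T aub 1 1%:M 1%:M (xh R) g0 w0 (cc R q T m) ha' ltr01 (@inst_valid R q T m aub a0).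
set Jp := fun om => alg_cost (Alg om 2%N 1%:M 1%:M aub T) 1%:M 1%:M (xh R) g0 w0 (cc R p T m) T in mJp Ip.
set Jq := fun om => alg_cost (Alg om 2%N 1%:M 1%:M aub T) 1%:M 1%:M (xh R) g0 w0 (cc R q T m) T in mJq Iq.
have Jge0 : forall k om, 0 <= alg_cost (Alg om 2%N 1%:M 1%:M aub T) 1%:M 1%:M (xh R) g0 w0 (cc R k T m) T.
  by move=> k om; apply: sumr_ge0 => t _; exact: cc_ge0.
have Jpq : forall om, mR * (1 - mR * aub) <= Jp om + Jq om.
  move=> om; rewrite /Jp /Jq /alg_cost -big_split /=.
  set pol := Alg om 2%N 1%:M 1%:M aub T.
  apply: (@pair_bound R p q aub T m _ _ _ _ hpq ha hmT).
  - by rewrite /alg_state /=; exact: xh_simplex.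
  - by rewrite /alg_state /=; exact: xh_simplex.
  - by move=> t; apply: Hval.
  - by move=> t; apply: Hval.
  - by move=> t; rewrite alg_state_S step_simpl.
  - by move=> t; rewrite alg_state_S step_simpl.
  - rewrite /alg_state (@run_ext R 2 pol 1%:M 1%:M (xh R) g0 w0 (cc R p T m) (cc R q T m)) // => i hi.
    apply/funext => x; apply/funext => u; by rewrite /cc leqNgt hi.
have infp := @inf_bound R p q aub T m hpq ha hmT.
have infq := @inf_bound R q p aub T m hqp ha hmT.
rewrite -/X -/mR in infp infq.
set ip := inf _ in Ip infp.
set iq := inf _ in Iq infq.
rewrite leeBlDr // in Ip.
rewrite leeBlDr // in Iq.
have I1 : (\int[P]_om ((Jp om + Jq om)%:E) = \int[P]_om (Jp om)%:E + \int[P]_om (Jq om)%:E)%E.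
  have TTp := proj2 (measurable_realfun.measurable_EFinP _ Jp) mJp.
  have TTq := proj2 (measurable_realfun.measurable_EFinP _ Jq) mJq.
  rewrite -ge0_integralD //; try (by apply: eq_integral => om _; rewrite EFinD);
    try (by move=> om _; rewrite lee_fin; apply: Jge0); try exact TTp; try exact TTq.
have K0 : 0 <= mR * (1 - mR * aub) by apply: mulr_ge0 => //; lra.
have I2 : (\int[P]_om (cst (mR * (1 - mR * aub))%:E om) <= \int[P]_om ((Jp om + Jq om)%:E))%E.
  apply: ge0_le_integral => //; try (by move=> om _; rewrite lee_fin);
    try (by move=> om _; rewrite lee_fin; apply: Jpq); try exact: measurable_cst;
    try exact (proj2 (measurable_realfun.measurable_EFinP _ (Jp \+ Jq)) (measurable_realfun.measurable_funD mJp mJq)).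
rewrite integral_cst // in I2.
have PT : (P : {measure set Omega -> \bar R}) [set: Omega]%classic = 1%E by exact: probability_setT.
rewrite PT mule1 I1 in I2.
have I3 := le_trans I2 (leeD Ip Iq).
rewrite -!EFinD lee_fin in I3.
have h1 : mR * (mR * aub) <= mR / 4 by nra.
have h2 : mR * X <= mR / 8 by nra.
have hu : 1 <= tR / (8 * beta) by rewrite ler_pdivlMr; lra.
have E2 : tR / (4 * beta) = 2 * (tR / (8 * beta)) by field; lra.
have E3 : 1 / (32 * beta) * tR = (tR / (8 * beta)) / 4 by field; lra.
rewrite E3; rewrite E2 in hm2.
lra.
Qed.
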